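(* Let $S\subsetneq\mathbb{S}$ be nonempty, let $j^*=\min(\mathbb{S}\setminus S)$ (the highest-quality product not in $S$), and set $q^{\max}=\bar q_0(S)$, $q^{\min}=\bar q_0(S\cup\{j^*\})$ (so $q^{\min}<q^{\max}$). For $q\in(0,1)$ let $v_i(q)=V(qe^{\theta_i-1})$ and $$R_S(q)=\sum_{i\in S}\frac{v_i(q)}{1-v_i(q)}+\frac{1}{q+\sum_{i\in S}v_i(q)}-1 .$$ Assume $v_i(q)<1/2$ for all $i\in S$ and all $q\in[q^{\min},q^{\max}]$. Then $R_S$ is quasi-convex on $[q^{\min},q^{\max}]$.
   Context: Sellers $\mathbb{S}=\{1,\dots,n\}$ with qualities $\theta_1\ge\dots\ge\theta_n\ge0$. $V:(0,\infty)\to(0,1)$: $V(x)=$ the unique $v\in(0,1)$ with $v\exp(v/(1-v))=x$. For nonempty $T\subseteq\mathbb{S}$, $\bar q_0(T)\in(0,1)$ is the unique solution of $\sum_{i\in T}V(\bar q_0e^{\theta_i-1})=1-\bar q_0$. (For $j\notin S$, $R_S(\bar q_0(S\cup\{j\}))$ is the Bertrand equilibrium revenue of displaying $S\cup\{j\}$, and $R_S(\bar q_0(S))$ that of displaying $S$.) A function $f$ on an interval is quasi-convex if $f(\lambda x+(1-\lambda)y)\le\max\{f(x),f(y)\}$ for all $x,y$ in the interval and $\lambda\in[0,1]$. *)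

(* Defs.v *)
From Stdlib Require Import Reals Lra List.
Open Scope R_scope.

Definition sumL (l : list nat) (f : nat -> R) : R :=
  fold_right (fun i acc => f i + acc) 0 l.

Definition is_V (V : R -> R) : Prop :=
  forall x, 0 < x -> 0 < V x < 1 /\ V x * exp (V x / (1 - V x)) = x.

Definition vi (V : R -> R) (theta : nat -> R) (i : nat) (q : R) : R :=
  V (q * exp (theta i - 1)).

Definition is_qbar0 (V : R -> R) (theta : nat -> R) (T : list nat) (q : R) : Prop :=
  0 < q < 1 /\ sumL T (fun i => vi V theta i q) = 1 - q.

Definition RS (V : R -> R) (theta : nat -> R) (S : list nat) (q : R) : R :=
  sumL S (fun i => vi V theta i q / (1 - vi V theta i q))
  + 1 / (q + sumL S (fun i => vi V theta i q)) - 1.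

Definition quasiconvex_on (f : R -> R) (a b : R) : Prop :=
  forall x y lam, a <= x <= b -> a <= y <= b -> 0 <= lam <= 1 ->
    f (lam * x + (1 - lam) * y) <= Rmax (f x) (f y).

(* Main.v *)
Require Import Defs.
From Stdlib Require Import Reals Lra List Ranalysis5.
From Coquelicot Require Import Coquelicot.
Open Scope R_scope.

Definition Mv (v : R) := 1 - v + v * v.
Definition Fw (v : R) := v * exp (v / (1 - v)).
Definition Fd (v : R) := exp (v / (1 - v)) * (1 + v / ((1 - v) * (1 - v))).

Lemma Fw_deriv v : v < 1 -> derivable_pt_lim Fw v (Fd v).
Proof.
  intros Hv. apply is_derive_Reals. unfold Fw, Fd.
  auto_derive. repeat split; lra.
  change (v * / (1 + - v)) with (v / (1 - v)). field. lra.
Qed.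

Lemma Fw_incr x y : 0 < x -> x < y -> y < 1 -> Fw x < Fw y.
Proof.
  intros H1 H2 H3. unfold Fw.
  assert (x / (1 - x) < y / (1 - y)).
  { assert (y / (1 - y) - x / (1 - x) = (y - x) / ((1 - x) * (1 - y))) by (field; lra).
    assert (0 < (y - x) / ((1 - x) * (1 - y))).
    { apply Rdiv_lt_0_compat. lra. apply Rmult_lt_0_compat; lra. }
    lra. }
  apply exp_increasing in H.
  assert (0 < exp (x / (1 - x))) by apply exp_pos.
  apply Rle_lt_trans with (x * exp (y / (1 - y))).
  - apply Rmult_le_compat_l; lra.
  - apply Rmult_lt_compat_r. apply exp_pos. lra.
Qed.


Lemma V_Fw (V : R -> R) (HV : is_V V) x : 0 < x -> Fw (V x) = x.
Proof. intros H. destruct (HV x H) as [_ H2]. exact H2. Qed.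

Lemma V_range (V : R -> R) (HV : is_V V) x : 0 < x -> 0 < V x < 1.
Proof. intros H. destruct (HV x H) as [H2 _]. exact H2. Qed.

Lemma V_incr (V : R -> R) (HV : is_V V) x y : 0 < x -> x < y -> V x < V y.
Proof.
  intros H1 H2.
  destruct (V_range V HV x H1) as [A1 A2]. destruct (V_range V HV y ltac:(lra)) as [B1 B2].
  destruct (Rlt_le_dec (V x) (V y)) as [|Hle]; auto.
  destruct Hle as [Hlt|Heq].
  - pose proof (Fw_incr (V y) (V x) B1 Hlt A2) as H3.
    rewrite !(V_Fw V HV) in H3; lra.
  - assert (H3 : Fw (V y) = Fw (V x)) by (rewrite Heq; auto).
    rewrite !(V_Fw V HV) in H3; lra.
Qed.

Lemma V_le (V : R -> R) (HV : is_V V) x y : 0 < x -> x <= y -> V x <= V y.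
Proof. intros H1 [H2|H2]. left; apply (V_incr V HV); auto. subst; lra. Qed.

Lemma Fw_cont v : 0 < v < 1 -> continuity_pt Fw v.
Proof.
  intros H. apply derivable_continuous_pt. exists (Fd v). apply Fw_deriv; lra.
Qed.

Lemma V_cont (V : R -> R) (HV : is_V V) x : 0 < x -> continuity_pt V x.
Proof.
  intros Hx.
  destruct (V_range V HV (x/2) ltac:(lra)) as [L1 L2].
  destruct (V_range V HV (2*x) ltac:(lra)) as [U1 U2].
  assert (Hlu : V (x/2) < V (2*x)) by (apply (V_incr V HV); lra).
  apply (continuity_pt_recip_interv Fw V (V (x/2)) (V (2*x)) Hlu).
  - intros a b Ha Hab Hb. apply Fw_incr; lra.
  - intros y Hy1 Hy2. rewrite (V_Fw V HV) in Hy1 by lra. unfold comp, id. apply (V_Fw V HV); lra.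
  - intros y Hy1 Hy2. rewrite (V_Fw V HV) in Hy1, Hy2 by lra. split; apply (V_le V HV); lra.
  - intros a Ha. apply Fw_cont. lra.
  - rewrite !(V_Fw V HV) by lra. lra.
Qed.


Lemma V_deriv (V : R -> R) (HV : is_V V) x : 0 < x ->
  derivable_pt_lim V x (V x * ((1 - V x) * (1 - V x)) / (x * Mv (V x))).
Proof.
  intros Hx.
  destruct (V_range V HV (x/2) ltac:(lra)) as [L1 L2].
  destruct (V_range V HV (2*x) ltac:(lra)) as [U1 U2].
  assert (Prf : forall a, V (x/2) <= a <= V (2*x) -> derivable_pt Fw a).
  { intros a Ha. exists (Fd a). apply Fw_deriv. lra. }
  assert (Hin : V (x/2) <= V x <= V (2*x)) by (split; apply (V_le V HV); lra).
  pose proof (derivable_pt_lim_recip_interv Fw V (x/2) (2*x) x Prf (V_cont V HV x Hx)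
     ltac:(lra) ltac:(lra) Hin) as HH.
  assert (Hd : derive_pt Fw (V x) (Prf (V x) Hin) = Fd (V x)).
  { apply derive_pt_eq_0. apply Fw_deriv. destruct (V_range V HV x Hx); lra. }
  rewrite Hd in HH.
  destruct (V_range V HV x Hx) as [W1 W2].
  pose proof (V_Fw V HV x Hx) as HF. unfold Fw in HF.
  assert (He : exp (V x / (1 - V x)) = x / V x) by (field_simplify_eq; lra).
  assert (HM : 0 < Mv (V x)) by (unfold Mv; nra).
  replace (V x * ((1 - V x) * (1 - V x)) / (x * Mv (V x))) with (1 / Fd (V x)).
  - apply HH.
    + intros y Hy. unfold comp, id. apply (V_Fw V HV). lra.
    + unfold Fd. rewrite He. assert (0 < 1 + V x / ((1 - V x) * (1 - V x))).
      { assert (0 < V x / ((1 - V x) * (1 - V x))) by (apply Rdiv_lt_0_compat; nra). lra. }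
      assert (0 < x / V x) by (apply Rdiv_lt_0_compat; lra). nra.
  - unfold Fd. rewrite He. unfold Mv in *. field. repeat split; try lra; nra.
Qed.
Definition af v := v / Mv v.
Definition bf v := v * ((1 - v) * (1 - v)) / Mv v.
Definition aD v := (1 - v * v) / (Mv v * Mv v).
Definition bD v := (1 - v) * (1 - 3 * v + v * v - v * v * v) / (Mv v * Mv v).
Lemma Mv_pos v : 0 < Mv v. Proof. unfold Mv; nra. Qed.
Lemma af_deriv v : is_derive af v (aD v).
Proof. pose proof (Mv_pos v). unfold af, aD, Mv in *. auto_derive. lra. field. lra. Qed.
Lemma bf_deriv v : is_derive bf v (bD v).
Proof. pose proof (Mv_pos v). unfold bf, bD, Mv in *. auto_derive. lra. field. lra. Qed.
Lemma I1 v : 0 < v < 1/2 -> 0 <= aD v * bf v.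
Proof. intros H. pose proof (Mv_pos v). unfold aD, bf.
  apply Rmult_le_pos; apply Rlt_le; apply Rdiv_lt_0_compat; nra. Qed.
Lemma I3 v : 0 < v < 1/2 -> v / 3 <= bf v.
Proof. intros H. pose proof (Mv_pos v). apply Rmult_le_reg_r with (Mv v); auto.
  replace (bf v * Mv v) with (v*((1-v)*(1-v))) by (unfold bf; field; lra). unfold Mv. assert (0 <= (2 - v) * (1 - 2*v)) by nra. assert (0 <= v * ((2 - v) * (1 - 2*v))) by nra. nra. Qed.
Lemma I2 v : 0 < v < 1/2 -> bD v * bf v <= 4/3 * bf v + (-1/3) * v.
Proof. intros H. pose proof (Mv_pos v) as HM.
  assert (E: 4/3 * bf v + (-1/3) * v - bD v * bf v =
     v * (v * (5 - 13 * v + 9 * v * v - v*v*v - v*v*v*v)) / (3 * (Mv v * Mv v * Mv v))).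
  { unfold bf, bD, Mv in *. field. lra. }
  assert (0 <= v * (v * (5 - 13 * v + 9 * v * v - v*v*v - v*v*v*v)) / (3 * (Mv v * Mv v * Mv v))).
  { apply Rmult_le_pos. 2: { apply Rlt_le, Rinv_0_lt_compat. assert (0 < Mv v * Mv v) by nra. nra. }
    apply Rmult_le_pos. lra. apply Rmult_le_pos. lra.
    assert (0 <= v * v) by nra. assert (v*v*v <= v*v/2) by nra. assert (v*v*v*v <= v*v/4) by nra. nra. }
  lra. Qed.

Lemma d_plus f g x df dg: derivable_pt_lim f x df -> derivable_pt_lim g x dg -> derivable_pt_lim (fun t => f t + g t) x (df + dg).
Proof. intros H H0; exact (derivable_pt_lim_plus f g x df dg H H0). Qed.
Lemma d_minus f g x df dg: derivable_pt_lim f x df -> derivable_pt_lim g x dg -> derivable_pt_lim (fun t => f t - g t) x (df - dg).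
Proof. intros H H0; exact (derivable_pt_lim_minus f g x df dg H H0). Qed.
Lemma d_mult f g x df dg: derivable_pt_lim f x df -> derivable_pt_lim g x dg -> derivable_pt_lim (fun t => f t * g t) x (df * g x + f x * dg).
Proof. intros H H0; exact (derivable_pt_lim_mult f g x df dg H H0). Qed.
Lemma d_div f g x df dg: derivable_pt_lim f x df -> derivable_pt_lim g x dg -> g x <> 0 ->
  derivable_pt_lim (fun t => f t / g t) x ((df * g x - dg * f x) / (g x)²).
Proof. intros H H0 H1; exact (derivable_pt_lim_div f g x df dg H H0 H1). Qed.
Lemma d_comp f g x df dg: derivable_pt_lim f (g x) df -> derivable_pt_lim g x dg -> derivable_pt_lim (fun t => f (g t)) x (df * dg).
Proof. intros H H0. exact (derivable_pt_lim_comp g f x dg df H0 H). Qed.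
Lemma d_const c x : derivable_pt_lim (fun _ => c) x 0.
Proof. apply derivable_pt_lim_const. Qed.
Lemma d_id x : derivable_pt_lim (fun t => t) x 1.
Proof. apply derivable_pt_lim_id. Qed.
Lemma d_eq f x l l' : derivable_pt_lim f x l -> l = l' -> derivable_pt_lim f x l'.
Proof. intros H ->; exact H. Qed.

Lemma sumL_ext (l : list nat) f g : (forall i, In i l -> f i = g i) -> sumL l f = sumL l g.
Proof. induction l; simpl; intros H; auto. rewrite H, IHl; auto. Qed.
Lemma sumL_le (l : list nat) f g : (forall i, In i l -> f i <= g i) -> sumL l f <= sumL l g.
Proof. induction l; simpl; intros H. lra. pose proof (H a (or_introl eq_refl)).
  pose proof (IHl (fun i Hi => H i (or_intror Hi))). lra. Qed.
Lemma sumL_lin (l : list nat) c1 c2 f g : sumL l (fun i => c1 * f i + c2 * g i) = c1 * sumL l f + c2 * sumL l g.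
Proof. induction l; simpl. ring. rewrite IHl. ring. Qed.
Lemma sumL_mulr (l : list nat) f c : sumL l (fun i => f i * c) = sumL l f * c.
Proof. induction l; simpl. ring. rewrite IHl. ring. Qed.
Lemma sumL_deriv (l : list nat) (f : nat -> R -> R) (f' : nat -> R) q :
  (forall i, In i l -> derivable_pt_lim (f i) q (f' i)) ->
  derivable_pt_lim (fun t => sumL l (fun i => f i t)) q (sumL l f').
Proof.
  induction l; simpl; intros H.
  - apply d_const.
  - apply (d_plus (f a) (fun t => sumL l (fun i => f i t))).
    apply H; auto. apply IHl; auto.
Qed.

Lemma vq_pos V (HV : is_V V) theta i q : 0 < q -> 0 < vi V theta i q < 1.
Proof. intros Hq. unfold vi. apply (V_range V HV). apply Rmult_lt_0_compat; auto. apply exp_pos. Qed.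

Lemma vq_deriv V (HV : is_V V) theta i q : 0 < q ->
  derivable_pt_lim (fun t => vi V theta i t) q (bf (vi V theta i q) * / q).
Proof.
  intros Hq. unfold vi. set (c := exp (theta i - 1)).
  assert (Hc : 0 < c) by apply exp_pos.
  assert (H2 : derivable_pt_lim (fun t => t * c) q c).
  { apply is_derive_Reals. auto_derive; auto. ring. }
  pose proof (V_deriv V HV (q * c) ltac:(nra)) as H1.
  eapply d_eq. apply (d_comp V (fun t => t * c) q _ _ H1 H2).
  destruct (V_range V HV (q*c) ltac:(nra)).
  pose proof (Mv_pos (V (q*c))).
  unfold bf. field. repeat split; lra.
Qed.

Lemma comp_deriv V (HV : is_V V) theta i (h : R -> R) h' q : 0 < q ->
  (forall v, 0 < v < 1 -> is_derive h v (h' v)) ->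
  derivable_pt_lim (fun t => h (vi V theta i t)) q (h' (vi V theta i q) * (bf (vi V theta i q) * / q)).
Proof.
  intros Hq Hh. apply (d_comp h (fun t => vi V theta i t)).
  apply is_derive_Reals. apply Hh. apply vq_pos; auto.
  apply vq_deriv; auto.
Qed.

Definition Dq V theta S q := q + sumL S (fun i => vi V theta i q).
Definition Pf V theta S q := sumL S (fun i => af (vi V theta i q))
  - (q + sumL S (fun i => bf (vi V theta i q))) / (Dq V theta S q * Dq V theta S q).

Lemma sumL_pos (l : list nat) f : (forall i, In i l -> 0 < f i) -> 0 <= sumL l f.
Proof. intros H. replace 0 with (sumL l (fun _ => 0)). apply sumL_le. intros; apply Rlt_le; auto.
  clear H; induction l; simpl; auto; lra. Qed.

Lemma Dq_pos V (HV : is_V V) theta S q : 0 < q -> 0 < Dq V theta S q.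
Proof. intros Hq. unfold Dq. pose proof (sumL_pos S (fun i => vi V theta i q)
  (fun i _ => proj1 (vq_pos V HV theta i q Hq))). lra. Qed.

Lemma R_deriv V (HV : is_V V) theta S q : 0 < q ->
  derivable_pt_lim (RS V theta S) q (Pf V theta S q * / q).
Proof.
  intros Hq.
  assert (Hg : forall v, 0 < v < 1 -> is_derive (fun v => v / (1 - v)) v (1 / ((1 - v) * (1 - v)))).
  { intros v Hv. auto_derive. lra. field. lra. }
  pose proof (sumL_deriv S (fun i t => vi V theta i t / (1 - vi V theta i t))
     (fun i => 1 / ((1 - vi V theta i q) * (1 - vi V theta i q)) * (bf (vi V theta i q) * / q)) q
     (fun i _ => comp_deriv V HV theta i _ _ q Hq Hg)) as H1.
  pose proof (sumL_deriv S (fun i t => vi V theta i t) (fun i => bf (vi V theta i q) * / q) q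
     (fun i _ => vq_deriv V HV theta i q Hq)) as H1b.
  pose proof (d_plus (fun t => t) _ q _ _ (d_id q) H1b) as HD.
  pose proof (Dq_pos V HV theta S q Hq) as HDp. unfold Dq in HDp.
  pose proof (d_div (fun _ => 1) _ q _ _ (d_const 1 q) HD ltac:(lra)) as H2.
  pose proof (d_minus _ (fun _ => 1) q _ _ (d_plus _ _ q _ _ H1 H2) (d_const 1 q)) as H3.
  unfold RS. eapply d_eq. exact H3.
  rewrite (sumL_ext S _ (fun i => af (vi V theta i q) * / q)).
  2: { intros i _. destruct (vq_pos V HV theta i q Hq). pose proof (Mv_pos (vi V theta i q)).
       unfold af, bf. field. repeat split; lra. }
  rewrite !sumL_mulr. unfold Pf, Dq, Rsqr. field. split; lra.
Qed.

Definition Pd V theta S q :=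
  let D := Dq V theta S q in
  let B := sumL S (fun i => bf (vi V theta i q)) in
  let DD := 1 + sumL S (fun i => bf (vi V theta i q) * / q) in
  sumL S (fun i => aD (vi V theta i q) * (bf (vi V theta i q) * / q))
  - (((1 + sumL S (fun i => bD (vi V theta i q) * (bf (vi V theta i q) * / q))) * (D * D)
      - (DD * D + D * DD) * (q + B)) / (D * D)²).

Lemma P_deriv V (HV : is_V V) theta S q : 0 < q ->
  derivable_pt_lim (Pf V theta S) q (Pd V theta S q).
Proof.
  intros Hq.
  pose proof (sumL_deriv S (fun i t => af (vi V theta i t))
     (fun i => aD (vi V theta i q) * (bf (vi V theta i q) * / q)) q
     (fun i _ => comp_deriv V HV theta i _ _ q Hq (fun v _ => af_deriv v))) as HA.
  pose proof (sumL_deriv S (fun i t => bf (vi V theta i t))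
     (fun i => bD (vi V theta i q) * (bf (vi V theta i q) * / q)) q
     (fun i _ => comp_deriv V HV theta i _ _ q Hq (fun v _ => bf_deriv v))) as HB.
  pose proof (d_plus (fun t => t) _ q _ _ (d_id q) HB) as HN.
  pose proof (sumL_deriv S (fun i t => vi V theta i t) (fun i => bf (vi V theta i q) * / q) q
     (fun i _ => vq_deriv V HV theta i q Hq)) as H1b.
  pose proof (d_plus (fun t => t) _ q _ _ (d_id q) H1b) as HD.
  pose proof (d_mult _ _ q _ _ HD HD) as HDD.
  pose proof (Dq_pos V HV theta S q Hq) as HDp. unfold Dq in HDp.
  pose proof (d_div _ _ q _ _ HN HDD ltac:(nra)) as HQ.
  pose proof (d_minus _ _ q _ _ HA HQ) as H.
  unfold Pf, Dq. eapply d_eq. exact H.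
  unfold Pd, Dq. cbv zeta. reflexivity.
Qed.

Lemma Pd_pos V (HV : is_V V) theta S q : 0 < q ->
  (forall i, In i S -> vi V theta i q < 1/2) -> 0 < Pd V theta S q.
Proof.
  intros Hq Hh.
  assert (Hv : forall i, In i S -> 0 < vi V theta i q < 1/2).
  { intros i Hi. split. apply vq_pos; auto. apply Hh; auto. }
  unfold Pd, Dq. cbv zeta.
  rewrite (sumL_ext S (fun i => aD (vi V theta i q) * (bf (vi V theta i q) * / q))
             (fun i => aD (vi V theta i q) * bf (vi V theta i q) * / q))
    by (intros; ring).
  rewrite (sumL_ext S (fun i => bD (vi V theta i q) * (bf (vi V theta i q) * / q))
             (fun i => bD (vi V theta i q) * bf (vi V theta i q) * / q))
    by (intros; ring).
  rewrite !sumL_mulr.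
  pose proof (sumL_le S _ _ (fun i Hi => I1 _ (Hv i Hi))) as HY.
  pose proof (sumL_le S _ _ (fun i Hi => I2 _ (Hv i Hi))) as HX.
  pose proof (sumL_le S _ _ (fun i Hi => I3 _ (Hv i Hi))) as HB3.
  rewrite sumL_lin in HX.
  replace (sumL S (fun i => vi V theta i q / 3)) with (sumL S (fun i => vi V theta i q) * / 3) in HB3
    by (rewrite <- sumL_mulr; apply sumL_ext; intros; unfold Rdiv; ring).
  replace (sumL S (fun _ => 0)) with 0 in HY by (clear; induction S; simpl; auto; lra).
  pose proof (sumL_pos S (fun i => vi V theta i q) (fun i Hi => proj1 (Hv i Hi))) as Hs.
  set (Y := sumL S (fun i => aD (vi V theta i q) * bf (vi V theta i q))) in *.
  set (X := sumL S (fun i => bD (vi V theta i q) * bf (vi V theta i q))) in *.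
  set (B := sumL S (fun i => bf (vi V theta i q))) in *.
  set (s := sumL S (fun i => vi V theta i q)) in *.
  set (D := q + s).
  assert (HD : 0 < D) by (unfold D; lra).
  assert (Hnum : 0 < Y * (D * D * D) - (q + X) * D + 2 * ((q + B) * (q + B))).
  { assert (0 <= Y * (D * D * D)) by (apply Rmult_le_pos; [lra | nra]).
    assert ((q + X) * D <= (q + (4/3 * B + -1/3 * s)) * D) by (apply Rmult_le_compat_r; lra).
    unfold D in *.
    assert (0 <= (B - s/3) * (B - s/3)) by nra.
    assert (0 <= q * (8/3 * B - 2/3 * s)) by nra.
    nra. }
  replace (Y * / q - ((1 + X * / q) * (D * D) - ((1 + B * / q) * D + D * (1 + B * / q)) * (q + B)) / (D * D)²)
    with ((Y * (D * D * D) - (q + X) * D + 2 * ((q + B) * (q + B))) / (q * (D * D * D))).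
  - apply Rdiv_lt_0_compat; auto. apply Rmult_lt_0_compat; auto. apply Rmult_lt_0_compat; auto. apply Rmult_lt_0_compat; auto.
  - unfold Rsqr. field. split; lra.
Qed.

Lemma key V (HV : is_V V) theta S (qmin qmax : R) (Hq0 : 0 < qmin)
  (Hhalf : forall i q, In i S -> qmin <= q <= qmax -> vi V theta i q < 1 / 2) :
  forall a z b, qmin <= a -> a <= z -> z <= b -> b <= qmax ->
  RS V theta S z <= Rmax (RS V theta S a) (RS V theta S b).
Proof.
  intros a z b Ha Haz Hzb Hb.
  destruct (Rle_dec (RS V theta S z) (Rmax (RS V theta S a) (RS V theta S b))) as [|Hn]; auto.
  exfalso. apply Rnot_le_lt in Hn.
  assert (Hza : RS V theta S a < RS V theta S z) by (eapply Rle_lt_trans; [apply Rmax_l|exact Hn]).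
  assert (Hzb' : RS V theta S b < RS V theta S z) by (eapply Rle_lt_trans; [apply Rmax_r|exact Hn]).
  assert (Haz' : a < z) by (destruct Haz as [|E]; auto; subst; lra).
  assert (Hzb2 : z < b) by (destruct Hzb as [|E]; auto; subst; lra).
  destruct (MVT_cor2 (RS V theta S) (fun q => Pf V theta S q * / q) a z Haz'
              (fun c Hc => R_deriv V HV theta S c ltac:(lra))) as [c1 [E1 Hc1]].
  destruct (MVT_cor2 (RS V theta S) (fun q => Pf V theta S q * / q) z b Hzb2
              (fun c Hc => R_deriv V HV theta S c ltac:(lra))) as [c2 [E2 Hc2]].
  assert (P1 : 0 < Pf V theta S c1 * / c1).
  { destruct (Rlt_le_dec 0 (Pf V theta S c1 * / c1)); auto.
    assert (Pf V theta S c1 * / c1 * (z - a) <= 0) by (apply Rmult_le_0_r; lra). lra. }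
  assert (P2 : Pf V theta S c2 * / c2 < 0).
  { destruct (Rlt_le_dec (Pf V theta S c2 * / c2) 0); auto.
    assert (0 <= Pf V theta S c2 * / c2 * (b - z)) by (apply Rmult_le_pos; lra). lra. }
  assert (Q1 : 0 < Pf V theta S c1).
  { replace (Pf V theta S c1) with (Pf V theta S c1 * / c1 * c1) by (field; lra).
    apply Rmult_lt_0_compat; lra. }
  assert (Q2 : Pf V theta S c2 < 0).
  { replace (Pf V theta S c2) with (Pf V theta S c2 * / c2 * c2) by (field; lra).
    assert (0 < c2) by lra.
    assert (- (Pf V theta S c2 * / c2) * c2 > 0) by (apply Rmult_lt_0_compat; lra). lra. }
  assert (Hc12 : c1 < c2) by lra.
  destruct (MVT_cor2 (Pf V theta S) (Pd V theta S) c1 c2 Hc12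
              (fun c Hc => P_deriv V HV theta S c ltac:(lra))) as [c3 [E3 Hc3]].
  assert (0 < Pd V theta S c3).
  { apply Pd_pos; auto. lra. intros i Hi. apply Hhalf; auto. lra. }
  assert (0 < Pd V theta S c3 * (c2 - c1)) by (apply Rmult_lt_0_compat; lra).
  lra.
Qed.

Theorem lemma5 (n : nat) (theta : nat -> R) (V : R -> R)
  (HV : is_V V)
  (Htheta_mono : forall i j, (1 <= i)%nat -> (i <= j)%nat -> (j <= n)%nat -> theta j <= theta i)
  (Htheta_nn : forall i, (1 <= i <= n)%nat -> 0 <= theta i)
  (S : list nat) (HS_nodup : NoDup S)
  (HS_sub : forall i, In i S -> (1 <= i <= n)%nat)
  (HS_ne : S <> nil)
  (jstar : nat) (Hj_range : (1 <= jstar <= n)%nat) (Hj_notin : ~ In jstar S)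
  (Hj_min : forall j, (1 <= j <= n)%nat -> ~ In j S -> (jstar <= j)%nat)
  (qmax qmin : R)
  (Hqmax : is_qbar0 V theta S qmax)
  (Hqmin : is_qbar0 V theta (jstar :: S) qmin)
  (Hhalf : forall i q, In i S -> qmin <= q <= qmax -> vi V theta i q < 1 / 2) :
  quasiconvex_on (RS V theta S) qmin qmax.
Proof.
  intros x y lam Hx Hy Hl.
  destruct Hqmin as [[Hq0 _] _].
  destruct (Rle_dec x y) as [Hxy|Hxy].
  - apply (key V HV theta S qmin qmax Hq0 Hhalf); try lra; nra.
  - rewrite Rmax_comm. apply (key V HV theta S qmin qmax Hq0 Hhalf); try lra; nra.
Qed.
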